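(* Let $b\ge 2$ be even and put $c_i=b^{n+i}+1$. If $n=1$ then $F(SC^{+}(b,1))=b^3-1$. If $n\ge 2$ then $\max\mathrm{Ap}(SC^{+}(b,n),c_0)=c_1+(b-1)c_n$ and $$F(SC^{+}(b,n)) = c_1+(b-1)c_n-c_0=(b-1)(b^{2n}+b^{n}+1).$$
   Context: For an even integer $b\ge2$ and $n\ge0$, $SC^{+}(b,n)=\langle\{b^{n+i}+1: i\in\mathbb{N}\}\rangle$ (submonoid of $(\mathbb{N},+)$ generated by these numbers, a numerical semigroup). $\mathrm{Ap}(S,x)=\{s\in S:s-x\notin S\}$; $F(S)$ is the greatest integer not in $S$. *)

(* Defs.v *)
From mathcomp Require Import all_boot.
Set Implicit Arguments. Unset Strict Implicit. Unset Printing Implicit Defensive.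

Inductive SCplus (b n : nat) : nat -> Prop :=
  | SC_zero : SCplus b n 0
  | SC_add (i x : nat) : SCplus b n x -> SCplus b n (b ^ (n + i) + 1 + x).

(* Apery set Ap(S,x) = { s in S : s - x notin S } (integer subtraction:
   if s < x then s - x is negative, hence not in S). *)
Definition Apery (S : nat -> Prop) (x s : nat) : Prop :=
  S s /\ (s < x \/ ~ S (s - x)).

Definition IsMax (P : nat -> Prop) (m : nat) : Prop :=
  P m /\ forall s, P s -> s <= m.

Definition IsFrobenius (S : nat -> Prop) (F : nat) : Prop :=
  ~ S F /\ forall m, F < m -> S m.

(* Main.v *)
Require Import Defs.
From mathcomp Require Import all_boot all_algebra ring zify.
Set Implicit Arguments. Unset Strict Implicit. Unset Printing Implicit Defensive.

Inductive Q (b : nat) : nat -> nat -> Prop :=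
  | Q0 : Q b 0 0
  | QS e y k : Q b y k -> Q b (b ^ e + y) k.+1.

Lemma Qadd b y1 k1 y2 k2 : Q b y1 k1 -> Q b y2 k2 -> Q b (y1 + y2) (k1 + k2).
Proof.
elim=> [|e y k _ IH] H2; first by rewrite !add0n.
rewrite -addnA addSn; exact: QS (IH H2).
Qed.

Lemma Qcopies b e m : Q b (m * b ^ e) m.
Proof. elim: m => [|m IH]; first exact: Q0. rewrite mulSn; exact: QS. Qed.

Lemma Qsplit b e : 1 <= b -> forall m j, (b - 1) * j + m <= m * b ^ e ->
  Q b (m * b ^ e) (m + (b - 1) * j).
Proof.
move=> hb; elim: e => [|e IH] m j.
  rewrite expn0 muln1 => h.
  have : (b - 1) * j <= 0 by move: h; rewrite -{2}(add0n m) leq_add2r.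
  rewrite leqn0 => /eqP ->.
  rewrite addn0; have := Qcopies b 0 m; by rewrite expn0 muln1.
move=> h; case: (leqP m j) => hmj.
  have := IH (m * b) (j - m).
  have hp : 1 <= b ^ e by rewrite expn_gt0; lia.
  rewrite expnS in h *.
  have -> : m * (b * b ^ e) = m * b * b ^ e by rewrite mulnA.
  have -> : m + (b - 1) * j = m * b + (b - 1) * (j - m).
    have -> : j = m + (j - m) by lia.
    rewrite addKn; nia.
  apply; nia.
have hp : 1 <= b ^ e by rewrite expn_gt0; lia.
have A := IH (j * b) 0.
rewrite muln0 addn0 add0n in A.
have A' := A (leq_pmulr _ hp).
have B := Qcopies b e.+1 (m - j).
have C := Qadd A' B.
rewrite expnS in C *.
have -> : m * (b * b ^ e) = j * b * b ^ e + (m - j) * (b * b ^ e).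
  have {1}-> : m = j + (m - j) by lia. nia.
have -> : m + (b - 1) * j = j * b + (m - j) by nia.
exact: C.
Qed.

Lemma Q_SC b n y k : Q b y k -> SCplus b n (k + b ^ n * y).
Proof.
elim=> [|e y' k' _ IH]; first by rewrite muln0; exact: SC_zero.
have -> : k'.+1 + b ^ n * (b ^ e + y') = b ^ (n + e) + 1 + (k' + b ^ n * y').
  rewrite expnD; lia.
exact: SC_add.
Qed.

Lemma SC_Q b n s : SCplus b n s -> exists k y, s = k + b ^ n * y /\ Q b y k.
Proof.
elim=> [|i x _ [k [y [-> H]]]]; first by exists 0, 0; split; [rewrite muln0 | exact: Q0].
exists k.+1, (b ^ i + y); split; last exact: QS.
rewrite expnD; lia.
Qed.

Lemma pow_mod b e : 1 <= b -> exists g, b ^ e = 1 + (b - 1) * g.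
Proof.
move=> hb; elim: e => [|e [g IH]]; first by exists 0; rewrite expn0 muln0.
exists (1 + b * g); rewrite expnS IH; nia.
Qed.

Lemma Q_cong b y k : 1 <= b -> Q b y k -> exists a, y = k + (b - 1) * a.
Proof.
move=> hb; elim=> [|e y' k' _ [a IH]]; first by exists 0; rewrite muln0.
have [g Hg] := pow_mod e hb.
exists (g + a); rewrite Hg IH; nia.
Qed.

Lemma Q_low b y k : Q b y k -> exists j z, j <= k /\ y = j + b * z /\ (j = k -> z = 0).
Proof.
elim=> [|e y' k' _ [j [z [h1 [h2 h3]]]]]; first by exists 0, 0; rewrite muln0.
case: e => [|e].
  exists j.+1, z; rewrite expn0 h2; split; [lia|split; [lia|]].
  move=> h; apply h3; lia.
exists j, (b ^ e + z); rewrite expnS h2; split; [lia|split; [nia|lia]].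
Qed.

Lemma divuniq d r1 r2 A B : r1 < d -> r2 < d -> r1 + d * A = r2 + d * B -> r1 = r2 /\ A = B.
Proof.
move=> h1 h2 h.
have hAB : A = B.
  case: (ltngtP A B) => // hl.
  - have : d * A.+1 <= d * B by rewrite leq_mul2l hl orbT.
    lia.
  - have : d * B.+1 <= d * A by rewrite leq_mul2l hl orbT.
    lia.
subst; lia.
Qed.

Lemma ex2 m X : ~~ odd m.+1 -> 2 * (m - 1) <= X -> exists t w, t < m /\ X = 2 * t + m * w.
Proof.
move=> he hX.
have hm : odd m by move: he => /= /negbNE.
have hm0 : 0 < m by case: m hm {he hX}.
have [c hc] : exists c, m.+1 = 2 * c.
  exists (m.+1)./2; have := odd_double_half m.+1; rewrite (negbTE he) add0n -muln2 mulnC; by move=> ->.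
set T := c * X.
have hT := divn_eq T m.
have ht := ltn_pmod T hm0.
set s := T %/ m in hT; set t := T %% m in hT ht.
have e1 : X + m * X = 2 * (s * m) + 2 * t.
  have : 2 * T = X + m * X by rewrite /T mulnA -hc; lia.
  rewrite hT; lia.
have h2t : 2 * t <= X by lia.
have hXs : X <= 2 * s.
  have : m * X <= m * (2 * s) by nia.
  by rewrite leq_mul2l eqn0Ngt hm0.
exists t, (2 * s - X); split => //.
rewrite mulnBr; nia.
Qed.

Lemma notFrob m n : 1 <= m -> ~~ odd m.+1 -> 1 <= n ->
  ~ SCplus m.+1 n (m * (m.+1 ^ n * m.+1 ^ n + m.+1 ^ n + 1)).
Proof.
move=> hm he hn H.
have [k [y [Hs HQ]]] := SC_Q H.
have [a Ha] := Q_cong (isT : 1 <= m.+1) HQ.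
have [g Hg] := pow_mod n (isT : 1 <= m.+1).
rewrite subn1 /= in Ha Hg.
have [N' HN'] : exists N', m.+1 ^ n = m.+1 * N'.
  by exists (m.+1 ^ n.-1); rewrite -expnS prednK.
move: Hs Hg HN'; set N := m.+1 ^ n => Hs Hg HN'.
have hNpos : 0 < N by rewrite /N expn_gt0.
have hN' : 0 < N' by move: hNpos; rewrite HN' muln_gt0 => /andP[].
have hk := divn_eq k N.
have hr := ltn_pmod k hNpos.
move: hk hr; set t := k %/ N; set r := k %% N => hk hr.
have hmN : m < N by rewrite HN'; apply: (leq_trans (ltnSn m)); exact: leq_pmulr.
have [er et] : r = m /\ t + y = m * (N + 1).
  apply: (divuniq hr hmN).
  have -> : r + N*(t+y) = t*N + r + N*y by ring.
  have -> : m + N*(m*(N+1)) = m * (N*N+N+1) by ring.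
  by rewrite Hs hk.
have E : m * N = t * (N + 1) + m * a.
  rewrite Ha hk er in et.
  have e3 : m*(N+1) = m*N + m by ring.
  have e4 : t*(N+1) = t*N + t by ring.
  lia.
have E2 : 2 * t + m * (t * g + a) = m * N.
  have e5 : t*(N+1) = 2*t + m*(t*g) by rewrite Hg; ring.
  rewrite mulnDr; lia.
have hodd : odd m by move: he => /= /negbNE.
have hd : m %| 2 * t.
  have : m %| 2 * t + m * (t * g + a) by rewrite E2 dvdn_mulr.
  by rewrite (dvdn_addl _ (dvdn_mulr _ (dvdnn m))).
rewrite Gauss_dvdr ?coprimen2 // in hd.
have htm : t < m.
  have : t * (N + 1) < m * (N + 1).
    have e3 : m*(N+1) = m*N + m by ring.
    lia.
  by rewrite ltn_pmul2r ?addn1.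
have t0 : t = 0.
  case: (posnP t) => // tpos; have := dvdn_leq tpos hd; lia.
have ek : k = m by rewrite hk t0 er mul0n.
have ey : y = m + m.+1 * (m * N').
  have -> : y = m * (N + 1) by lia.
  rewrite HN'; ring.
have [j [z [h1 [h2 h3]]]] := Q_low HQ.
rewrite ey in h2.
have [ej ez] : j = m /\ z = m * N'.
  apply: (divuniq (d := m.+1)); [lia | lia | by rewrite -h2].
have := h3 (etrans ej (esym ek)).
rewrite ez => /eqP; rewrite muln_eq0; lia.
Qed.

Lemma coverLem m n R : 1 <= m -> ~~ odd m.+1 -> 1 <= n -> m.+1 <= R -> R <= m.+1 ^ n + m ->
  SCplus m.+1 n (R + m.+1 ^ n * (m * (m.+1 ^ n + 1))).
Proof.
move=> hm he hn hR1 hR2.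
have [g Hg] := pow_mod n (isT : 1 <= m.+1).
rewrite subn1 /= in Hg.
have [N' HN'] : exists N', m.+1 ^ n = m.+1 * N'.
  by exists (m.+1 ^ n.-1); rewrite -expnS prednK.
have Qs := Qsplit (e := n) (isT : 1 <= m.+1).
move: Hg HN' hR2 Qs; set N := m.+1 ^ n => Hg HN' hR2 Qs.
have hNpos : 0 < N by rewrite /N expn_gt0.
have hN' : 0 < N' by move: hNpos; rewrite HN' muln_gt0 => /andP[].
have hmN : m.+1 <= N by rewrite HN'; exact: leq_pmulr.
have e3 : m*(N+1) = m*N + m by ring.
have hmN2 : N <= m * N by exact: leq_pmull.
have [X hX] : exists X, m*(N+1) = R + X by exists (m*(N+1) - R); lia.
have hX2 : 2 * (m - 1) <= X.
  have h1 : (m-1)*2 <= (m-1)*N by rewrite leq_mul2l; apply/orP; right; lia.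
  have h2 : (m-1)*N = m*N - N by rewrite mulnBl mul1n.
  lia.
have [t [w [ht hw]]] := ex2 he hX2.
have e5 : t*(N+1) = 2*t + m*(t*g) by rewrite Hg; ring.
have hgt : t * g < w.+1.
  have h1 : t.+1*(N+1) <= m*(N+1) by rewrite leq_mul2r; apply/orP; right.
  have h2 : t.+1*(N+1) = t*(N+1) + N + 1 by ring.
  have h3 : m * (t*g) < m * w.+1.
    have h4 : m * w.+1 = m*w + m by ring.
    lia.
  by rewrite ltn_pmul2l in h3.
have [a Ea] : exists a, w = t*g + a by exists (w - t*g); lia.
have hXa : m*(N+1) = R + t*(N+1) + m*a.
  rewrite hX hw Ea e5; ring.
have ha : a < N.
  have : m * a < m * N by lia.
  by rewrite ltn_pmul2l.
have [j hj] : exists j, N = a + j.+1 by exists (N - a.+1); lia.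
have e6 : m*N = m*a + m*j + m by rewrite hj; ring.
have A := Qs m j.
rewrite subn1 /= in A.
have A' := A ltac:(lia).
have C := Qadd (Qcopies m.+1 0 (m - t)) A'.
have HQ : Q m.+1 (m*(N+1) - t) (R + t*N).
  have -> : m*(N+1) - t = (m-t) * m.+1^0 + m*N by rewrite expn0 muln1; lia.
  have -> : R + t*N = (m-t) + (m + m*j).
    have : t*(N+1) = t*N + t by ring.
    lia.
  exact: C.
have := Q_SC n HQ.
have ht2 : N * t <= N * (m*(N+1)) by rewrite leq_mul2l; apply/orP; right; lia.
rewrite mulnBr (mulnC t N).
have -> : R + N * t + (N * (m * (N + 1)) - N * t) = R + N * (m * (N + 1)) by lia.
done.
Qed.

Lemma SC_copies b n i k x : SCplus b n x -> SCplus b n (k * (b ^ (n + i) + 1) + x).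
Proof.
move=> H; elim: k => [|k IH]; first by rewrite mul0n add0n.
rewrite mulSn -addnA; exact: SC_add.
Qed.

Lemma frob m n : 1 <= m -> ~~ odd m.+1 -> 1 <= n ->
  IsFrobenius (SCplus m.+1 n) (m * (m.+1 ^ n * m.+1 ^ n + m.+1 ^ n + 1)).
Proof.
move=> hm he hn; split; first exact: (notFrob hm he hn).
have HM : SCplus m.+1 n (m * (m.+1 ^ n * m.+1 ^ n + m.+1 ^ n + 1) + m.+1 ^ n + 1).
  have := @SC_add m.+1 n 1 _ (@SC_copies m.+1 n n m 0 (@SC_zero m.+1 n)).
  rewrite addn0 !expnD expn1; set N := m.+1 ^ n.
  have -> : N * m.+1 + 1 + m * (N * N + 1) = m * (N * N + N + 1) + N + 1 by ring.
  done.
move: HM; set N := m.+1 ^ n => HM.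
have Hcov := @coverLem m n.
rewrite -/N in Hcov.
have hNpos : 0 < N by rewrite /N expn_gt0.
elim/ltn_ind => s IH hs.
case: (ltngtP s (m * (N * N + N + 1) + N + 1)) => hs2; last by rewrite hs2.
- have e : m * (N * N + N + 1) = m + N * (m * (N + 1)) by ring.
  have -> : s = (s - N * (m * (N + 1))) + N * (m * (N + 1)) by lia.
  apply: Hcov => //; lia.
- have h1 := IH (s - (N + 1)) ltac:(lia) ltac:(lia).
  have -> : s = m.+1 ^ (n + 0) + 1 + (s - (N + 1)) by rewrite addn0 -/N; lia.
  exact: SC_add.
Qed.

Theorem mainTheorem17 (b n : nat) :
  2 <= b -> ~~ odd b ->
  let c := fun i => b ^ (n + i) + 1 in
  (n = 1 -> IsFrobenius (SCplus b 1) (b ^ 3 - 1)) /\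
  (2 <= n ->
     IsMax (Apery (SCplus b n) (c 0)) (c 1 + (b - 1) * c n) /\
     IsFrobenius (SCplus b n) (c 1 + (b - 1) * c n - c 0) /\
     c 1 + (b - 1) * c n - c 0 = (b - 1) * (b ^ (2 * n) + b ^ n + 1)).
Proof.
case: b => [//|m] hb he c.
have hm : 1 <= m by [].
have e1 : m.+1 - 1 = m by lia.
rewrite e1.
split.
  move=> _; have := frob hm he (isT : 1 <= 1).
  rewrite expn1.
  have -> : m.+1 ^ 3 - 1 = m * (m.+1 * m.+1 + m.+1 + 1).
    have -> : m.+1 ^ 3 = m.+1 * m.+1 * m.+1 by rewrite !expnS expn0 muln1 mulnA.
    have -> : m.+1 * m.+1 * m.+1 = m * (m.+1 * m.+1 + m.+1 + 1) + 1 by ring.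
    by rewrite addnK.
  done.
move=> hn.
have hn1 : 1 <= n by lia.
have Fr := frob hm he hn1.
move: Fr; set N := m.+1 ^ n => Fr.
have ec0 : c 0 = N + 1 by rewrite /c addn0.
have ec1 : c 1 = m.+1 * N + 1 by rewrite /c expnD expn1 mulnC.
have ecn : c n = N * N + 1 by rewrite /c expnD.
have eM : c 1 + m * c n = m * (N * N + N + 1) + (N + 1).
  rewrite ec1 ecn; ring.
have eF : c 1 + m * c n - c 0 = m * (N * N + N + 1) by rewrite eM ec0 addnK.
have e2 : m.+1 ^ (2 * n) = N * N by rewrite /N -expnD addnn -mul2n.
have hc0M : c 0 <= c 1 + m * c n by rewrite eM ec0; lia.
split; last first.
  split; first by rewrite eF.
  by rewrite eF e2.
split.
  split.
    apply: Fr.2; rewrite eM; lia.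
  right; rewrite eF; exact: Fr.1.
move=> s [Hs Hor].
case: (leqP s (c 1 + m * c n)) => // hlt.
exfalso; case: Hor => [h|h]; first lia.
apply: h; apply: Fr.2.
rewrite -eF; lia.
Qed.
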